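(* Let $F:\mathcal{S}^{n\times n}\to\mathbb{R}$, $\boldsymbol{G}:\mathcal{S}^{n\times n}\to\mathbb{R}^q$, and let $\mathcal{C}\subseteq\mathbb{R}^n$ be closed. Consider the problems (P1) $\min F(\boldsymbol{X})$ subject to $\boldsymbol{G}(\boldsymbol{X})=\boldsymbol{0}$, $\boldsymbol{\lambda}(\boldsymbol{X})\in\mathcal{C}$, $\boldsymbol{X}\in\mathcal{S}^{n\times n}$; (P2) $\min f(\boldsymbol{Q},\boldsymbol{\lambda}):=F(\boldsymbol{Q}\operatorname{Diag}(\boldsymbol{\lambda})\boldsymbol{Q}^\top)$ subject to $\boldsymbol{G}(\boldsymbol{Q}\operatorname{Diag}(\boldsymbol{\lambda})\boldsymbol{Q}^\top)=\boldsymbol{0}$, $\boldsymbol{\lambda}\in\mathcal{C}$, $(\boldsymbol{Q},\boldsymbol{\lambda})\in\mathcal{O}(n,n)\times\mathbb{R}^n_\geq$. A matrix $\boldsymbol{X}^*\in\mathcal{S}^{n\times n}$ with pairwise distinct eigenvalues is a local minimum of (P1) if and only if one of its spectral decompositions $(\boldsymbol{Q}^*,\boldsymbol{\lambda}(\boldsymbol{X}^* ))$ (i.e. $\boldsymbol{Q}^*\in\mathcal{O}(n,n)$ with $\boldsymbol{X}^*=\boldsymbol{Q}^*\operatorname{Diag}(\boldsymbol{\lambda}(\boldsymbol{X}^* ))\boldsymbol{Q}^{*\top}$) is a local minimum of (P2). Furthermore, if one spectral decomposition of $\boldsymbol{X}^*$ is a local minimum of (P2), then all of its spectral decompositions are local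 minima of (P2).
   Context: $\mathcal{S}^{n\times n}$: real symmetric $n\times n$ matrices; $\mathcal{O}(n,n)$: real orthogonal $n\times n$ matrices; $\boldsymbol{\lambda}(\boldsymbol{X})$: eigenvalues of $\boldsymbol{X}$ in nonincreasing order; $\mathbb{R}^n_{\geq}=\{\boldsymbol{x}\in\mathbb{R}^n:x_1\ge\cdots\ge x_n\}$. Feasible sets: $\mathcal{X}_1=\{\boldsymbol{X}\in\mathcal{S}^{n\times n}:\boldsymbol{G}(\boldsymbol{X})=\boldsymbol{0},\ \boldsymbol{\lambda}(\boldsymbol{X})\in\mathcal{C}\}$ and $\mathcal{X}_2=\{(\boldsymbol{Q},\boldsymbol{\lambda})\in\mathcal{O}(n,n)\times\mathbb{R}^n_\geq:\boldsymbol{G}(\boldsymbol{Q}\operatorname{Diag}(\boldsymbol{\lambda})\boldsymbol{Q}^\top)=\boldsymbol{0},\ \boldsymbol{\lambda}\in\mathcal{C}\}$. $\boldsymbol{X}^*$ is a local minimum of (P1) if $\boldsymbol{X}^*\in\mathcal{X}_1$ and there is $\delta_1>0$ with $F(\boldsymbol{X}^* )\le F(\boldsymbol{X})$ for all $\boldsymbol{X}\in\mathcal{X}_1$ with $\|\boldsymbol{X}-\boldsymbol{X}^*\|_F\le\delta_1$. $(\boldsymbol{Q}^*,\boldsymbol{\lambda}^* )$ is a local minimum of (P2) if $(\boldsymbol{Q}^*,\boldsymbol{\lambda}^* )\in\mathcal{X}_2$ and there is $\delta_2>0$ with $f(\boldsymbol{Q}^*,\boldsymbol{\lambda}^* )\le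 f(\boldsymbol{Q},\boldsymbol{\lambda})$ for all $(\boldsymbol{Q},\boldsymbol{\lambda})\in\mathcal{X}_2$ with $\|\boldsymbol{Q}-\boldsymbol{Q}^*\|_F\le\delta_2$ and $\|\boldsymbol{\lambda}-\boldsymbol{\lambda}^*\|\le\delta_2$. *)

(* Defs.v *)
From HB Require Import structures.
From mathcomp Require Import all_boot all_order all_algebra.
From mathcomp Require Import all_classical all_reals all_analysis.
Set Implicit Arguments. Unset Strict Implicit. Unset Printing Implicit Defensive.
Import Order.TTheory GRing.Theory Num.Theory.
Import numFieldTopology.Exports numFieldNormedType.Exports.
Local Open Scope ring_scope.
Local Open Scope classical_set_scope.

Definition symmx (R : realType) (n : nat) (X : 'M[R]_n) : Prop := X^T = X.

Definition orthmx (R : realType) (n : nat) (Q : 'M[R]_n) : Prop :=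
  Q *m Q^T = 1%:M.

(* l \in R^n_>= : entries in nonincreasing order *)
Definition nonincr (R : realType) (n : nat) (l : 'rV[R]_n) : Prop :=
  forall i j : 'I_n, (i <= j)%N -> l 0 j <= l 0 i.

(* For a real symmetric
   matrix such a vector exists and is unique; otherwise the value is 0. *)
Definition eigvals (R : realType) (n : nat) (X : 'M[R]_n) : 'rV[R]_n :=
  xget 0 [set l : 'rV[R]_n | nonincr l /\
           char_poly X = \prod_(i < n) ('X - (l 0 i)%:P)].

Definition frob (R : realType) (m n : nat) (A : 'M[R]_(m, n)) : R :=
  Num.sqrt (\sum_(i < m) \sum_(j < n) A i j ^+ 2).

Definition feas1 (R : realType) (n q : nat) (G : 'M[R]_n -> 'rV[R]_q)
  (C : set 'rV[R]_n) (X : 'M[R]_n) : Prop :=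
  symmx X /\ G X = 0 /\ C (eigvals X).

Definition feas2 (R : realType) (n q : nat) (G : 'M[R]_n -> 'rV[R]_q)
  (C : set 'rV[R]_n) (Q : 'M[R]_n) (l : 'rV[R]_n) : Prop :=
  orthmx Q /\ nonincr l /\ G (Q *m diag_mx l *m Q^T) = 0 /\ C l.

Definition locmin1 (R : realType) (n q : nat) (F : 'M[R]_n -> R)
  (G : 'M[R]_n -> 'rV[R]_q) (C : set 'rV[R]_n) (Xs : 'M[R]_n) : Prop :=
  feas1 G C Xs /\
  exists d1 : R, 0 < d1 /\
    forall X : 'M[R]_n, feas1 G C X -> frob (X - Xs) <= d1 -> F Xs <= F X.

Definition fobj (R : realType) (n : nat) (F : 'M[R]_n -> R)
  (Q : 'M[R]_n) (l : 'rV[R]_n) : R := F (Q *m diag_mx l *m Q^T).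

Definition locmin2 (R : realType) (n q : nat) (F : 'M[R]_n -> R)
  (G : 'M[R]_n -> 'rV[R]_q) (C : set 'rV[R]_n)
  (Qs : 'M[R]_n) (ls : 'rV[R]_n) : Prop :=
  feas2 G C Qs ls /\
  exists d2 : R, 0 < d2 /\
    forall (Q : 'M[R]_n) (l : 'rV[R]_n), feas2 G C Q l ->
      frob (Q - Qs) <= d2 -> frob (l - ls) <= d2 ->
      fobj F Qs ls <= fobj F Q l.

Definition spec_decomp (R : realType) (n : nat) (X Q : 'M[R]_n) : Prop :=
  orthmx Q /\ X = Q *m diag_mx (eigvals X) *m Q^T.

(* Main.v *)
Require Import Defs.
From HB Require Import structures.
From mathcomp Require Import all_boot all_order all_algebra.
From mathcomp Require Import all_classical all_reals all_analysis.
Import Order.TTheory GRing.Theory Num.Theory.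
Import numFieldTopology.Exports numFieldNormedType.Exports.
Local Open Scope ring_scope.
Local Open Scope classical_set_scope.
Set Implicit Arguments. Unset Strict Implicit. Unset Printing Implicit Defensive.
Section Basics.
Variable R : realType.

Lemma orthmx_tr n (Q : 'M[R]_n) : orthmx Q -> Q^T *m Q = 1%:M.
Proof. rewrite /orthmx => h; exact: mulmx1C. Qed.

Lemma orthmxT n (Q : 'M[R]_n) : orthmx Q -> orthmx Q^T.
Proof. move=> h; rewrite /orthmx trmxK; exact: orthmx_tr. Qed.

Lemma orthmxM n (P Q : 'M[R]_n) : orthmx P -> orthmx Q -> orthmx (P *m Q).
Proof.
rewrite /orthmx trmx_mul => hP hQ.
by rewrite mulmxA -(mulmxA P) hQ mulmx1 hP.
Qed.

Lemma char_poly_orth n (Q D : 'M[R]_n) : orthmx Q ->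
  char_poly (Q *m D *m Q^T) = char_poly D.
Proof.
move=> hQ; rewrite /char_poly /char_poly_mx.
pose Qp : 'M[{poly R}]_n := map_mx polyC Q.
have hQp : Qp *m Qp^T = 1%:M.
  by rewrite /Qp map_trmx -map_mxM hQ map_mx1.
have E : map_mx polyC (Q *m D *m Q^T) = Qp *m map_mx polyC D *m Qp^T.
  by rewrite /Qp !map_mxM map_trmx.
have EX : ('X%:M : 'M[{poly R}]_n) = Qp *m 'X%:M *m Qp^T.
  by rewrite mul_mx_scalar -scalemxAl hQp scalemx1.
rewrite E {1}EX -mulmxBl -mulmxBr.
by rewrite det_mulmx det_mulmx mulrAC -det_mulmx hQp det1 mul1r.
Qed.

Lemma prod_seq n (l : 'rV[R]_n) :
  \prod_(i < n) ('X - (l 0 i)%:P) =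
  \prod_(x <- [seq l 0 i | i <- enum 'I_n]) ('X - x%:P).
Proof. by rewrite big_map big_enum. Qed.

Lemma nonincr_sorted n (l : 'rV[R]_n) : nonincr l ->
  sorted (fun x y => y <= x) [seq l 0 i | i <- enum 'I_n].
Proof.
move=> hl.
apply/(sortedP 0) => k; rewrite size_map size_enum_ord => hk.
have hk0 : (k < n)%N by apply: ltn_trans hk.
have h1 := nth_enum_ord (Ordinal hk0) hk0.
have h2 := nth_enum_ord (Ordinal hk0) hk.
rewrite !(nth_map (Ordinal hk0)).
- by apply: hl; rewrite -?enumT ?h1 ?h2.
all: by rewrite -?enumT size_enum_ord.
Qed.

Lemma nonincr_eq n (l m : 'rV[R]_n) : nonincr l -> nonincr m ->
  \prod_(i < n) ('X - (l 0 i)%:P) = \prod_(i < n) ('X - (m 0 i)%:P) -> l = m.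
Proof.
move=> hl hm; rewrite !prod_seq => /prod_XsubC_eq hp.
have e : [seq l 0 i | i <- enum 'I_n] = [seq m 0 i | i <- enum 'I_n].
  apply: (sorted_eq _ _ (nonincr_sorted hl) (nonincr_sorted hm) hp).
  - by move=> x y z hyx hzy; apply: le_trans hzy hyx.
  - by move=> x y /andP[h1 h2]; apply/eqP; rewrite eq_le h1 h2.
apply/rowP => i.
have := congr1 (fun s => nth 0 s i) e.
rewrite !(nth_map i) -?enumT ?size_enum_ord // !nth_ord_enum //.
Qed.

Lemma eigvals_spec n (Q : 'M[R]_n) (l : 'rV[R]_n) : orthmx Q -> nonincr l ->
  eigvals (Q *m diag_mx l *m Q^T) = l.
Proof.
move=> hQ hl; rewrite /eigvals.
have hcp : char_poly (Q *m diag_mx l *m Q^T) = \prod_(i < n) ('X - (l 0 i)%:P).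
  rewrite char_poly_orth // char_poly_trig ?diag_mx_is_trig //.
  by apply: eq_bigr => i _; rewrite mxE eqxx.
case: xgetP.
- move=> m _ [hm hcm]; apply: nonincr_eq => //; by rewrite -hcm hcp.
- by move=> /(_ l) /=; rewrite hcp => /(_ (conj hl erefl)).
Qed.

End Basics.
From mathcomp Require Import complex polyrcf ring lra.
Section RealEig.
Variable R : realType.

Lemma sym_real_eig n (A : 'M[R]_n.+1) : A^T = A -> exists a : R, eigenvalue A a.
Proof.
move=> hA.
pose f := real_complex R.
pose Ac := map_mx f A.
have [z /eigenvalueP [v hv vn0]] := eigenvalue_closed Ac (ltn0Sn n).
have key : forall j, \sum_i v 0 i * f (A i j) = z * v 0 j.
  move=> j; move/rowP: (hv) => /(_ j); rewrite !mxE => <-.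
  by apply: eq_bigr => i _; rewrite mxE.
pose N := \sum_j v 0 j * conjc (v 0 j).
pose T := \sum_j \sum_i v 0 i * f (A i j) * conjc (v 0 j).
have S1 : T = z * N.
  rewrite /T /N mulr_sumr; apply: eq_bigr => j _.
  by rewrite mulrA -key mulr_suml.
have S2 : conjc T = T.
  rewrite /T rmorph_sum /=.
  under eq_bigr => j _ do rewrite rmorph_sum /=.
  rewrite exchange_big /=; apply: eq_bigr => i _; apply: eq_bigr => j _.
  rewrite !rmorphM /= conjcK.
  have -> : Complex (A i j) (- 0) = f (A i j) by rewrite oppr0.
  have hij : A j i = A i j by rewrite -[in LHS]hA mxE.
  rewrite hij.
  by rewrite mulrC (mulrC (conjc (v 0 i))) mulrA.
have SN : conjc N = N.
  rewrite /N rmorph_sum /=; apply: eq_bigr => j _.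
  by rewrite rmorphM /= conjcK mulrC.
have N0 : N != 0.
  apply/negP; rewrite /N psumr_eq0; last by move=> j _; apply: mulcJ_ge0.
  move=> /allP hall; apply/negP: vn0; rewrite negbK; apply/eqP/rowP => j.
  have := hall j (mem_index_enum j); rewrite implyTb mulf_eq0 conjc_eq0 orbb.
  by rewrite mxE => /eqP.
have zr : conjc z = z.
  apply: (mulIf N0); rewrite -S1 -{1}SN -rmorphM /= -S1 S2 //.
have [a za] : exists a : R, z = f a.
  move: zr; case: (z) => a b [] hb; exists a; rewrite /f /=; congr Complex.
  lra.
exists a; rewrite -(eigenvalue_map f); apply/eigenvalueP; exists v => //.
by move: hv; rewrite za.
Qed.

End RealEig.
Section Spec1.
Variable R : realType.

Lemma seq_max (s : seq R) (y : R) :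
  exists2 m, m \in y :: s & forall z, z \in y :: s -> z <= m.
Proof.
elim: s y => [|x s IH] y.
  by exists y; rewrite ?mem_head // => z; rewrite inE => /eqP ->.
have [m hm hb] := IH x.
exists (Num.max y m).
  case: (leP y m) => _; first by rewrite inE hm orbT.
  by rewrite mem_head.
move=> z; rewrite inE => /orP [/eqP ->|hz]; first by rewrite le_max lexx.
by rewrite le_max (hb z hz) orbT.
Qed.

Lemma sym_max_eig n (A : 'M[R]_n.+1) : A^T = A ->
  exists a : R, eigenvalue A a /\ forall b, eigenvalue A b -> b <= a.
Proof.
move=> hA; have [a0 h0] := sym_real_eig hA.
have p0 : char_poly A != 0 by apply: monic_neq0; apply: char_poly_monic.
have hs : forall x, eigenvalue A x = (x \in rootsR (char_poly A)).
  move=> x; rewrite eigenvalue_root_char -(roots_on_rootsR p0 x).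
  by rewrite in_itv.
move: h0; rewrite hs; case E: (rootsR (char_poly A)) => [//|y s] _.
have [m hm hb] := seq_max s y.
exists m; split; first by rewrite hs E.
by move=> b; rewrite hs E; apply: hb.
Qed.

Lemma eig_of_decomp n (A Q : 'M[R]_n) (d : 'rV[R]_n) :
  orthmx Q -> A = Q *m diag_mx d *m Q^T -> forall j, eigenvalue A (d 0 j).
Proof.
move=> hQ -> j; apply/eigenvalueP; exists ('e_j *m Q^T).
  rewrite !mulmxA -(mulmxA _ Q^T) (orthmx_tr hQ) mulmx1 -(rowE j (diag_mx d)) row_diag_mx.
  by rewrite scalemxAl.
apply/eqP => h0.
have := congr1 (fun M => M *m Q) h0; rewrite -mulmxA (orthmx_tr hQ) mulmx1 mul0mx.
move/matrixP => /(_ 0 j); rewrite !mxE !eqxx /=.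
by move/eqP; rewrite oner_eq0.
Qed.

Lemma unit_eigvec n (A : 'M[R]_n) (a : R) : eigenvalue A a ->
  exists u : 'rV[R]_n, u *m u^T = 1%:M /\ u *m A = a *: u.
Proof.
move=> /eigenvalueP [v hv vn0].
pose s := (v *m v^T) 0 0.
have es : s = \sum_i v 0 i ^+ 2.
  by rewrite /s mxE; apply: eq_bigr => i _; rewrite mxE expr2.
have s0 : 0 < s.
  rewrite lt_def es sumr_ge0 ?andbT; last by move=> i _; rewrite sqr_ge0.
  rewrite psumr_eq0; last by move=> i _; rewrite sqr_ge0.
  apply/negP => /allP hall; apply/negP: vn0; rewrite negbK; apply/eqP/rowP => j.
  have := hall j (mem_index_enum j); rewrite implyTb sqrf_eq0.
  by rewrite mxE => /eqP.
exists ((Num.sqrt s)^-1 *: v); split.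
  rewrite linearZ /= -scalemxAl -scalemxAr scalerA.
  apply/matrixP => i j; rewrite !ord1 mxE [X in _ = X]mxE eqxx mulr1n.
  rewrite -expr2 exprVn sqr_sqrtr ?ltW //.
  by rewrite mulVf // gt_eqF.
by rewrite -scalemxAl hv !scalerA mulrC.
Qed.

End Spec1.
Section House.
Variable R : realType.

Lemma rv_sq n (v : 'rV[R]_n) : (v *m v^T) 0 0 = \sum_i v 0 i ^+ 2.
Proof. by rewrite mxE; apply: eq_bigr => i _; rewrite mxE expr2. Qed.

Lemma rv_sq0 n (v : 'rV[R]_n) : (v *m v^T) 0 0 = 0 -> v = 0.
Proof.
rewrite rv_sq => /eqP; rewrite psumr_eq0; last by move=> i _; rewrite sqr_ge0.
move=> /allP hall; apply/rowP => j.
have := hall j (mem_index_enum j); rewrite implyTb sqrf_eq0.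
by rewrite mxE => /eqP.
Qed.

Lemma householder n (u : 'rV[R]_n.+1) : u *m u^T = 1%:M ->
  exists H : 'M[R]_n.+1, [/\ H^T = H, H *m H = 1%:M & 'e_0 *m H = u].
Proof.
move=> hu.
set e : 'rV[R]_n.+1 := 'e_0.
case: (eqVneq u e) => [-> | ne].
  by exists 1%:M; split; rewrite ?trmx1 ?mulmx1.
have ee : e *m e^T = 1%:M.
  by apply/matrixP => i j; rewrite !ord1 -rowE !mxE.
have eu : e *m u^T = (u 0 0)%:M.
  by apply/matrixP => i j; rewrite !ord1 -rowE !mxE.
have ue : u *m e^T = (u 0 0)%:M.
  by rewrite -[u *m e^T]trmxK trmx_mul trmxK eu tr_scalar_mx.
pose w := e - u.
pose c := 2 - 2 * u 0 0.
have ww : w *m w^T = c%:M.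
  rewrite /w linearB /= mulmxBl !mulmxBr ee eu ue hu.
  apply/matrixP => i j; rewrite !ord1 !mxE /= !mulr1n /c; lra.
have c0 : c != 0.
  apply/eqP => hc.
  have w0 : w = 0 by apply: rv_sq0; rewrite ww hc mxE eqxx mulr1n.
  move/eqP: w0; rewrite /w subr_eq0 eq_sym => h.
  by rewrite h in ne.
pose W := w^T *m w.
have WW : W *m W = c *: W.
  by rewrite /W mulmxA -(mulmxA w^T) ww mul_mx_scalar -scalemxAl.
pose k := 2 / c.
exists (1%:M - k *: W); split.
- by rewrite linearB linearZ /= trmx1 /W trmx_mul trmxK.
- rewrite mulmxBl !mulmxBr mulmx1 -!scalemxAl mul1mx -scalemxAr WW !scalerA mulmx1.
  have -> : k * k * c = k + k by rewrite /k; field.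
  by rewrite scalerDl opprB addrK subrK.
- rewrite mulmxBr mulmx1 -scalemxAr /W mulmxA.
  have -> : e *m w^T = (1 - u 0 0)%:M.
    rewrite /w linearB /= mulmxBr ee eu.
    by apply/matrixP => i j; rewrite !ord1 !mxE /= !mulr1n.
  rewrite mul_scalar_mx scalerA.
  have -> : k * (1 - u 0 0) = 1.
    rewrite /k; move: c0; rewrite /c => c0; field.
    by move: c0; apply: contra => /eqP h; apply/eqP; lra.
  by rewrite scale1r /w opprB addrC subrK.
Qed.

End House.
Section SpecThm.
Variable R : realType.

Lemma nonincr_cons n (a : R) (d : 'rV[R]_n) : nonincr d -> (forall k, d 0 k <= a) ->
  nonincr (row_mx (a%:M : 'rV[R]_1) d).
Proof.
move=> hd ha i j hij.
case: (splitP i) => [i0 ei | i' ei]; case: (splitP j) => [j0 ej | j' ej].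
- have -> : i = j by apply/val_inj; rewrite /= ei ej !ord1.
  by [].
- have -> : j = rshift 1 j' by apply/val_inj.
  have -> : i = lshift n i0 by apply/val_inj.
  by rewrite row_mxEr row_mxEl !ord1 mxE eqxx mulr1n.
- by move: hij; rewrite ei ej ord1.
- have -> : j = rshift 1 j' by apply/val_inj.
  have -> : i = rshift 1 i' by apply/val_inj.
  rewrite !row_mxEr; apply: hd.
  by move: hij; rewrite ei ej.
Qed.

Lemma diag_mx1 (a : R) : diag_mx (a%:M : 'rV[R]_1) = a%:M.
Proof. by apply/matrixP => i j; rewrite !ord1 !mxE. Qed.

Lemma spectral n (A : 'M[R]_n) : A^T = A ->
  exists Q : 'M[R]_n, exists d : 'rV[R]_n,
    [/\ orthmx Q, nonincr d & A = Q *m diag_mx d *m Q^T].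
Proof.
elim: n A => [|n IH] A hA.
  exists 1%:M, 0; split.
  - by rewrite /orthmx trmx1 mulmx1.
  - by move=> [].
  - by apply/matrixP => [[]].
have [a [ha amax]] := sym_max_eig hA.
have [u [hu hua]] := unit_eigvec ha.
have [H [hHT hHH hHe]] := householder hu.
pose B := H *m A *m H.
have hBT : B^T = B by rewrite /B !trmx_mul hHT hA mulmxA.
have hB0 : ('e_0 : 'rV[R]_n.+1) *m B = a *: 'e_0.
  by rewrite /B !mulmxA hHe hua -!scalemxAl -hHe -mulmxA hHH mulmx1.
have hAB : A = H *m B *m H.
  by rewrite /B !mulmxA hHH mul1mx -mulmxA hHH mulmx1.
clearbody B.
have hrow : forall j, B 0 j = a * (j == 0)%:R.
  move=> j; move/rowP: hB0 => /(_ j).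
  by rewrite -rowE !mxE eqxx.
have hcol : forall i, B i 0 = a * (i == 0)%:R.
  by move=> i; rewrite -hrow -[in LHS]hBT mxE.
have l0 : (lshift n (0 : 'I_1) : 'I_n.+1) = 0 by apply/val_inj.
have r0 : forall j : 'I_n, ((rshift 1 j : 'I_n.+1) == 0) = false.
  by move=> j; apply/negbTE; rewrite -val_eqE.
have hblk : B = block_mx (a%:M : 'M[R]_1) 0 0 (drsubmx (B : 'M[R]_(1 + n))).
  apply: (etrans (esym (submxK (B : 'M[R]_(1 + n)))) _); congr block_mx; apply/matrixP => i j; rewrite !mxE ?ord1.
  - by rewrite l0 hrow eqxx mulr1 mulr1n.
  - by rewrite l0 hrow r0 mulr0.
  - by rewrite l0 hcol r0 mulr0.
pose A' := drsubmx (B : 'M[R]_(1 + n)).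
have hA'T : A'^T = A' by rewrite /A' trmx_drsub hBT.
have [Q' [d' [hQ' hd' eA']]] := IH A' hA'T.
pose P : 'M[R]_(1 + n) := block_mx 1%:M 0 0 Q'.
pose d : 'rV[R]_(1 + n) := row_mx (a%:M : 'rV[R]_1) d'.
have hP : orthmx P.
  rewrite /orthmx /P tr_block_mx !trmx0 trmx1 mulmx_block.
  by rewrite !mulmx0 !mul0mx !addr0 !add0r mulmx1 hQ' scalar_mx_block.
have hH : orthmx H by rewrite /orthmx hHT.
have eB : B = P *m diag_mx d *m P^T.
  rewrite hblk /P /d diag_mx_row diag_mx1 tr_block_mx !trmx0 trmx1 !mulmx_block.
  rewrite !mulmx0 !mul0mx !addr0 !add0r mulmx1 mul1mx mul0mx mul0mx -eA'.
  by rewrite /A'.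
have eA : A = (H *m P) *m diag_mx d *m (H *m P)^T.
  by rewrite {1}hAB eB trmx_mul hHT !mulmxA.
exists (H *m P), d; split => //.
- exact: orthmxM.
- apply: nonincr_cons => // k.
  apply: amax.
  have := eig_of_decomp (orthmxM hH hP) eA (rshift 1 k).
  by rewrite /d (row_mxEr (a%:M : 'rV[R]_1) d').
Qed.

End SpecThm.
Section Tools.
Variable R : realType.

Lemma sum_ge_term (I : finType) (F : I -> R) (i : I) :
  (forall j, 0 <= F j) -> F i <= \sum_j F j.
Proof.
move=> h; rewrite (bigD1 i) //= lerDl; apply: sumr_ge0 => j _; exact: h.
Qed.

Lemma frob_ge m n (A : 'M[R]_(m, n)) i j : `|A i j| <= frob A.
Proof.
rewrite /frob -sqrtr_sqr ler_sqrt; last first.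
  by apply: sumr_ge0 => k _; apply: sumr_ge0 => l _; rewrite sqr_ge0.
apply: (le_trans _ (@sum_ge_term _ (fun k : 'I_m => \sum_(l < n) A k l ^+ 2) i _)); last first.
  by move=> k; apply: sumr_ge0 => l _; rewrite sqr_ge0.
by apply: (@sum_ge_term _ (fun l : 'I_n => A i l ^+ 2) j) => l; rewrite sqr_ge0.
Qed.

Lemma frob_le m n (A : 'M[R]_(m, n)) b : 0 <= b ->
  (forall i j, `|A i j| <= b) -> frob A <= (m * n)%:R * b.
Proof.
move=> b0 hA; rewrite /frob.
have hmn : 0 <= (m * n)%:R * b :> R by rewrite mulr_ge0.
rewrite -(ger0_norm hmn) -sqrtr_sqr ler_sqrt ?sqr_ge0 //.
apply: (@le_trans _ _ (\sum_(i < m) \sum_(j < n) b ^+ 2)).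
  apply: ler_sum => i _; apply: ler_sum => j _.
  rewrite -real_normK ?num_real //; have := hA i j; have := normr_ge0 (A i j); nra.
rewrite !sumr_const !card_ord -mulr_natr -mulrnA mulr_natr mulnC.
have hk : (m * n)%:R <= ((m * n)%:R) ^+ 2 :> R.
  rewrite -natrX ler_nat; case: (m * n)%N => // k.
  by rewrite expnS leq_pmulr.
have := sqr_ge0 b; rewrite -mulr_natr; nra.
Qed.

Lemma frob_ge0 m n (A : 'M[R]_(m, n)) : 0 <= frob A.
Proof. exact: sqrtr_ge0. Qed.

Lemma mul_bound m n p (A : 'M[R]_(m, n)) (B : 'M[R]_(n, p)) a b :
  (forall i k, `|A i k| <= a) -> (forall k j, `|B k j| <= b) ->
  forall i j, `|(A *m B) i j| <= n%:R * (a * b).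
Proof.
move=> hA hB i j; rewrite mxE.
apply: le_trans (ler_norm_sum _ _ _) _.
apply: (@le_trans _ _ (\sum_(k < n) (a * b))); last first.
  by rewrite sumr_const card_ord mulr_natl.
apply: ler_sum => k _; rewrite normrM.
apply: ler_pM => //; exact: normr_ge0.
Qed.

Lemma orth_rowsq n (Q : 'M[R]_n) i : orthmx Q -> \sum_j Q i j ^+ 2 = 1.
Proof.
move=> hQ; have := congr1 (fun M : 'M[R]_n => M i i) hQ.
rewrite !mxE eqxx mulr1n => <-; apply: eq_bigr => j _; by rewrite mxE expr2.
Qed.

Lemma orth_entry n (Q : 'M[R]_n) i j : orthmx Q -> `|Q i j| <= 1.
Proof.
move=> hQ; rewrite -[1]sqrtr1 -sqrtr_sqr ler_sqrt ?ler01 //.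
rewrite -(orth_rowsq i hQ); apply: (@sum_ge_term _ (fun l : 'I_n => Q i l ^+ 2) j).
by move=> l; rewrite sqr_ge0.
Qed.

Lemma orth_entryT n (Q : 'M[R]_n) i j : orthmx Q -> `|Q^T i j| <= 1.
Proof. by move=> hQ; rewrite mxE; apply: orth_entry. Qed.

End Tools.
Section Forward.
Variable R : realType.

Lemma qdq_sym n (Q : 'M[R]_n) (l : 'rV[R]_n) : symmx (Q *m diag_mx l *m Q^T).
Proof. by rewrite /symmx !trmx_mul trmxK tr_diag_mx mulmxA. Qed.

Lemma symmx_eig n (X : 'M[R]_n) : symmx X ->
  nonincr (eigvals X) /\ exists Q, spec_decomp X Q.
Proof.
move=> hX; have [Q [d [hQ hd eX]]] := spectral hX.
have ed : eigvals X = d by rewrite eX eigvals_spec.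
split; first by rewrite ed.
by exists Q; split => //; rewrite ed.
Qed.

Lemma diag_bound n (l : 'rV[R]_n) b : 0 <= b -> (forall k, `|l 0 k| <= b) ->
  forall i j, `|diag_mx l i j| <= b.
Proof.
move=> b0 h i j; rewrite mxE; case: (i == j); rewrite ?mulr1n ?mulr0n ?normr0 //.
Qed.

Lemma tele3 (V : zmodType) (a b c d : V) : a - b + (b - c) + (c - d) = a - d.
Proof. by rewrite !addrA subrK subrK. Qed.

Lemma norm3 m n (A B C : 'M[R]_(m, n)) i j :
  `|(A + B + C) i j| <= `|A i j| + `|B i j| + `|C i j|.
Proof.
rewrite !mxE; apply: le_trans (ler_normD _ _) _.
by rewrite lerD2r ler_normD.
Qed.

Lemma forward n q (F : 'M[R]_n -> R) (G : 'M[R]_n -> 'rV[R]_q)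
  (C : set 'rV[R]_n) (Xs Qs : 'M[R]_n) :
  locmin1 F G C Xs -> spec_decomp Xs Qs -> locmin2 F G C Qs (eigvals Xs).
Proof.
move=> [[hsym [hG hC]] [d1 [d1p hmin]]] [hQs eXs].
have [hnl _] := symmx_eig hsym.
move: hnl eXs hC; set lam := eigvals Xs => hnl eXs hC.
split.
  by split => //; split => //; split => //; rewrite -eXs.
pose N : R := n%:R.
have N0 : 0 <= N by rewrite ler0n.
pose L : R := 1 + \sum_k `|lam 0 k|.
have hL : forall k, `|lam 0 k| <= L.
  move=> k; have := @sum_ge_term _ _ (fun k => `|lam 0 k|) k (fun j => normr_ge0 _).
  rewrite /L; lra.
have L0 : 1 <= L.
  have : 0 <= \sum_k `|lam 0 k| by apply: sumr_ge0 => k _; exact: normr_ge0.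
  rewrite /L; lra.
pose K := N ^+ 4 * (2 * L + 2) + 1.
have K0 : 0 < K.
  rewrite /K; have : 0 <= N ^+ 4 * (2 * L + 2).
    by apply: mulr_ge0; [exact: exprn_ge0 | lra].
  lra.
pose del := Num.min 1 (d1 / K).
have del0 : 0 < del by rewrite /del lt_min ltr01 divr_gt0.
have del1 : del <= 1 by rewrite /del ge_min lexx.
have delK : del * K <= d1.
  rewrite -ler_pdivlMr // /del ge_min lexx orbT //.
exists del; split => //.
move=> Q l [hQ [hl [hGQ hCl]]] hdQ hdl.
rewrite /fobj -eXs.
apply: hmin.
  split; first exact: qdq_sym.
  by split => //; rewrite eigvals_spec.
have eQ : forall i j, `|(Q - Qs) i j| <= del.
  by move=> i j; apply: le_trans (frob_ge _ _ _) hdQ.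
have eQT : forall i j, `|(Q - Qs)^T i j| <= del.
  by move=> i j; rewrite mxE; apply: eQ.
have el : forall k, `|(l - lam) 0 k| <= del.
  by move=> k; apply: le_trans (frob_ge _ _ _) hdl.
have hl1 : forall k, `|l 0 k| <= L + 1.
  move=> k; have := el k; have := hL k; rewrite !mxE.
  have := ler_normD (l 0 k - lam 0 k) (lam 0 k); rewrite subrK.
  lra.
have eX : Q *m diag_mx l *m Q^T - Qs *m diag_mx lam *m Qs^T =
  (Q - Qs) *m (diag_mx l *m Q^T) + Qs *m (diag_mx (l - lam) *m Q^T)
  + Qs *m diag_mx lam *m (Q - Qs)^T.
  rewrite linearB /= linearB /= !(mulmxBl, mulmxBr) !mulmxA.
  by rewrite tele3.
have L1 : 0 <= L + 1 by lra.
have L00 : 0 <= L by lra.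
have b1 := mul_bound eQ (mul_bound (diag_bound L1 hl1) (fun i j => orth_entryT i j hQ)).
have b2 := mul_bound (fun i j => orth_entry i j hQs)
   (mul_bound (diag_bound (ltW del0) el) (fun i j => orth_entryT i j hQ)).
have b3 := mul_bound (mul_bound (fun i j => orth_entry i j hQs) (diag_bound L00 hL)) eQT.
pose bnd := N ^+ 2 * ((2 * L + 2) * del).
have hX : forall i j, `|(Q *m diag_mx l *m Q^T - Xs) i j| <= bnd.
  move=> i j; rewrite {1}eXs eX; apply: le_trans (norm3 _ _ _ _ _) _.
  have -> : bnd = N * (del * (N * ((L + 1) * 1))) + N * (1 * (N * (del * 1)))
     + N * ((N * (1 * L)) * del) by rewrite /bnd; ring.
  by rewrite lerD ?b3 // lerD ?b1 ?b2.
have bnd0 : 0 <= bnd.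
  rewrite /bnd; apply: mulr_ge0; first exact: exprn_ge0.
  apply: mulr_ge0; lra.
apply: le_trans (frob_le bnd0 hX) _.
apply: le_trans delK; rewrite natrM -/N /bnd /K.
have : 0 <= N ^+ 4 * (2 * L + 2) * del.
  by apply: mulr_ge0; [apply: mulr_ge0; [exact: exprn_ge0 | lra] | lra].
have -> : N * N * (N ^+ 2 * ((2 * L + 2) * del)) = N ^+ 4 * (2 * L + 2) * del by ring.
move=> h; have : del * (N ^+ 4 * (2 * L + 2) + 1) = N ^+ 4 * (2 * L + 2) * del + del by ring.
lra.
Qed.
End Forward.
From mathcomp Require Import zify.
Section Comb.
Variable R : realType.

Lemma incr_ge n (s : 'I_n -> 'I_n) :
  (forall i k : 'I_n, (i < k)%N -> (s i < s k)%N) -> forall i : 'I_n, (i <= s i)%N.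
Proof.
move=> hs i; have [m] := ubnP i; elim: m i => [|m IH] i hi; first by [].
case: i hi => [[|i] hi] /= him; first by [].
have hi' : (i < n)%N by apply: ltnW.
have := IH (Ordinal hi') ltac:(simpl; lia).
have := hs (Ordinal hi') (Ordinal hi) ltac:(simpl; lia).
simpl; lia.
Qed.

Lemma incr_id n (s : 'I_n -> 'I_n) :
  (forall i k : 'I_n, (i < k)%N -> (s i < s k)%N) -> forall i, s i = i.
Proof.
move=> hs i; apply/val_inj/eqP; rewrite eqn_leq (incr_ge hs) andbT.
pose s' := fun j : 'I_n => rev_ord (s (rev_ord j)).
have hs' : forall j k : 'I_n, (j < k)%N -> (s' j < s' k)%N.
  move=> j k hjk; rewrite /s' /=.
  have := hs (rev_ord k) (rev_ord j) ltac:(rewrite /=; have := ltn_ord k; lia).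
  have := ltn_ord (s (rev_ord j)); have := ltn_ord (s (rev_ord k)). lia.
have := incr_ge hs' (rev_ord i); rewrite /s' /= rev_ordK.
have := ltn_ord (s i); have := ltn_ord i; lia.
Qed.

Lemma gap_exists n (l : 'rV[R]_n) : (forall i j, l 0 i = l 0 j -> i = j) ->
  exists2 g : R, 0 < g & forall i j, i != j -> g <= `|l 0 i - l 0 j|.
Proof.
move=> hd.
pose g := \big[Num.min/1]_(p : 'I_n * 'I_n | p.1 != p.2) `|l 0 p.1 - l 0 p.2|.
exists g.
  rewrite /g; apply: (big_ind (fun x => 0 < x)) => //.
    by move=> x y hx hy; rewrite lt_min hx hy.
  move=> [i j] /= hij; rewrite normr_gt0 subr_eq0; apply/eqP => e.
  by move/eqP: hij; apply; apply: hd.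
move=> i j hij; rewrite /g (bigD1 (i, j)) //=.
by rewrite ge_min lexx.
Qed.

End Comb.
Section Backward.
Variable R : realType.

Lemma ar_inc (li lk mi mk g e : R) : 0 < g -> e <= g / 4 -> g <= li - lk ->
  `|li - mi| <= e -> `|lk - mk| <= e -> mi <= mk -> False.
Proof. rewrite !ler_norml => g0 he hg /andP[a b] /andP[c d] hm; lra. Qed.

Lemma ar_off (g e eta y p : R) : 0 < g -> 2 * e = g * eta -> 0 <= p ->
  y * p <= e -> g / 2 <= y -> p <= eta.
Proof.
move=> g0 he p0 hy hg.
have h : g / 2 * p <= e := le_trans (ler_wpM2r p0 hg) hy.
have : g * p <= g * eta.
  rewrite -he (_ : g * p = 2 * (g / 2 * p)); last by field.
  by rewrite ler_wpM2l.
by rewrite ler_pM2l.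
Qed.

Lemma ar_tri (g e a b c : R) : 0 < g -> g <= a -> b <= e -> e <= g / 4 -> a <= c + b ->
  g / 2 <= c.
Proof. lra. Qed.

Lemma ar_diag (a sq S t eta : R) : a <= 1 -> sq <= a -> sq + S = 1 -> S <= t ->
  t <= eta -> 1 - a <= eta.
Proof. lra. Qed.

Lemma backward n q (F : 'M[R]_n -> R) (G : 'M[R]_n -> 'rV[R]_q)
  (C : set 'rV[R]_n) (Xs Qs : 'M[R]_n) :
  symmx Xs -> (forall i j, eigvals Xs 0 i = eigvals Xs 0 j -> i = j) ->
  spec_decomp Xs Qs -> locmin2 F G C Qs (eigvals Xs) -> locmin1 F G C Xs.
Proof.
move=> hsym hdist [hQs eXs] [[_ [hnl [hG hC]]] [d2 [d2p hmin]]].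
move: hdist hnl eXs hG hC hmin; set lam := eigvals Xs => hdist hnl eXs hG hC hmin.
split.
  by split => //; split => //; rewrite eXs.
have [n0|npos] := posnP n.
  exists 1; split => // X _ _.
  have -> : X = Xs by apply/matrixP => i; exfalso; have := ltn_ord i; lia.
  by [].
pose N : R := n%:R.
have N1 : 1 <= N by rewrite /N ler1n.
have N0 : 0 < N by lra.
have N2 : 1 <= N ^+ 2 by rewrite expr2; nra.
have [g0 g0p hg0] := gap_exists hdist.
pose g := Num.min g0 1.
have gp : 0 < g by rewrite lt_min g0p ltr01.
have g1 : g <= 1 by rewrite ge_min lexx orbT.
have hg : forall i j, i != j -> g <= `|lam 0 i - lam 0 j|.
  by move=> i j hij; apply: le_trans (hg0 i j hij); rewrite ge_min lexx.
pose dl := Num.min d2 1.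
have dlp : 0 < dl by rewrite lt_min d2p ltr01.
have dl1 : dl <= 1 by rewrite ge_min lexx orbT.
have dl2 : dl <= d2 by rewrite ge_min lexx.
pose eps := g * dl / (4 * N ^+ 3).
pose eta := dl / (2 * N ^+ 3).
have epsp : 0 < eps by rewrite /eps divr_gt0 ?mulr_gt0 ?exprn_gt0.
have etap : 0 < eta by rewrite /eta divr_gt0 ?mulr_gt0 ?exprn_gt0.
have h : dl / N ^+ 2 <= 1 by rewrite ler_pdivrMr ?exprn_gt0 // mul1r; lra.
have h' : 0 <= dl / N ^+ 2 by apply: divr_ge0; [lra | apply: exprn_ge0; lra].
have I1 : N * eps <= g / 4.
  have -> : N * eps = g / 4 * (dl / N ^+ 2) by rewrite /eps; field; rewrite ?pnatr_eq0 -?lt0n.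
  have : 0 <= g / 4 by lra.
  nra.
have I2 : 2 * eps = g * eta by rewrite /eps /eta; field; rewrite ?pnatr_eq0 -?lt0n.
have I3 : N * eta <= 1.
  have -> : N * eta = 1 / 2 * (dl / N ^+ 2) by rewrite /eta; field; rewrite ?pnatr_eq0 -?lt0n.
  lra.
have I4 : (n * n)%:R * (N * (1 * eta)) <= d2.
  have -> : (n * n)%:R * (N * (1 * eta)) = dl / 2 by rewrite natrM /eta; field; rewrite ?pnatr_eq0 -?lt0n.
  lra.
have I5 : (1 * n)%:R * (N * eps) <= d2.
  have -> : (1 * n)%:R * (N * eps) = g / 4 * (dl / N) by rewrite mul1n /eps; field; rewrite ?pnatr_eq0 -?lt0n.
  apply: le_trans dl2.
  have h5 : dl / N <= dl by rewrite ler_pdivrMr //; nra.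
  have h6 : 0 <= dl / N by apply: divr_ge0; lra.
  nra.
pose del1 := eps / N ^+ 2.
have del1p : 0 < del1 by rewrite divr_gt0 ?exprn_gt0.
exists del1; split => //.
move=> X [hX [hGX hCX]] hdX.
have [hnm [Q [hQ eX]]] := symmx_eig hX.
move: hnm eX hCX; set mu := eigvals X => hnm eX hCX.
pose P := Qs^T *m Q.
have hQsT := orthmx_tr hQs.
have hQT := orthmx_tr hQ.
have hP : orthmx P.
  by rewrite /orthmx /P trmx_mul trmxK !mulmxA -(mulmxA Qs^T Q Q^T) hQ mulmx1 hQsT.
have hQsP : Qs *m P = Q by rewrite /P mulmxA hQs mul1mx.
have E : diag_mx lam *m P - P *m diag_mx mu = Qs^T *m (Xs - X) *m Q.
  rewrite mulmxBr mulmxBl; congr (_ - _).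
    by rewrite {1}eXs /P !mulmxA hQsT mul1mx.
  rewrite {1}eX /P !mulmxA -(mulmxA (Qs^T *m Q *m diag_mx mu) Q^T Q) hQT mulmx1.
  by [].
have key : forall i j, (lam 0 i - mu 0 j) * P i j = (Qs^T *m (Xs - X) *m Q) i j.
  by move=> i j; rewrite -E mul_diag_mx mul_mx_diag !mxE; ring.
clearbody P.
have hXe : forall k l, `|(Xs - X) k l| <= del1.
  move=> k l; have := le_trans (frob_ge (X - Xs) k l) hdX.
  by rewrite !mxE distrC.
have hE : forall i j, `|(Qs^T *m (Xs - X) *m Q) i j| <= eps.
  have b := mul_bound (mul_bound (fun i j => orth_entryT i j hQs) hXe)
     (fun i j => orth_entry i j hQ).
  move=> i j; apply: le_trans (b i j) _.
  rewrite /del1 -/N le_eqVlt; apply/orP; left; apply/eqP; field.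
  by rewrite ?pnatr_eq0 -?lt0n.
have h1 : forall i j, `|lam 0 i - mu 0 j| * `|P i j| <= eps.
  by move=> i j; rewrite -normrM key hE.
have hPe : forall i j, `|P i j| <= 1 by move=> i j; apply: orth_entry.
have hrow : forall i, \sum_j P i j ^+ 2 = 1 by move=> i; apply: orth_rowsq.
have hsq : forall i j, P i j ^+ 2 <= `|P i j|.
  move=> i j; rewrite -real_normK ?num_real //.
  have := hPe i j; have := normr_ge0 (P i j); nra.
have step2 : forall i, exists j, N^-1 <= `|P i j|.
  move=> i; case: (boolP [exists j, N^-1 <= `|P i j|]) => [/existsP [j hj] | /existsPn hn].
    by exists j.
  exfalso.
  have : \sum_j P i j ^+ 2 < \sum_(j < n) N^-1.
    apply: ltr_sum.
      by apply/hasP; exists (Ordinal npos) => //; rewrite mem_index_enum.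
    by move=> j _; apply: le_lt_trans (hsq i j) _; rewrite ltNge; exact: hn j.
  rewrite hrow sumr_const card_ord -mulr_natr mulVf ?lt_irreflexive //.
  by rewrite pnatr_eq0 -lt0n.
have [s hs] := boolp.choice step2.
have hls : forall i, `|lam 0 i - mu 0 (s i)| <= N * eps.
  move=> i; set x := `|lam 0 i - mu 0 (s i)|.
  have hx := h1 i (s i); have hp := hs i; have x0 : 0 <= x := normr_ge0 _.
  have hxN : x * N^-1 <= eps.
    apply: le_trans hx; rewrite ler_wpM2l //.
  have -> : x = N * (x * N^-1) by field; rewrite pnatr_eq0 -lt0n.
  by rewrite ler_wpM2l // ltW.
have hsinc : forall i k : 'I_n, (i < k)%N -> (s i < s k)%N.
  move=> i k hik.
  have hik' : i != k by rewrite neq_ltn hik.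
  have lik : lam 0 k <= lam 0 i := hnl i k (ltnW hik).
  have := hg i k hik'; rewrite ger0_norm ?subr_ge0 // => hgap.
  rewrite ltnNge; apply/negP => hki.
  exact: (ar_inc gp I1 hgap (hls i) (hls k) (hnm (s k) (s i) hki)).
have hsid := incr_id hsinc.
have hdiag : forall i, `|lam 0 i - mu 0 i| <= N * eps.
  by move=> i; have := hls i; rewrite hsid.
have hoff : forall i j, i != j -> `|P i j| <= eta.
  move=> i j hij.
  have hgap := hg i j hij.
  have hd := hdiag j.
  have tri := ler_distD (mu 0 j) (lam 0 i) (lam 0 j).
  rewrite (distrC (mu 0 j)) in tri.
  have hy2 := ar_tri gp hgap hd I1 tri.
  exact: (ar_off gp I2 (normr_ge0 _) (h1 i j) hy2).
pose sv : 'rV[R]_n := \row_i (if 0 <= P i i then 1 else -1).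
have sv2 : forall i, sv 0 i * sv 0 i = 1.
  by move=> i; rewrite mxE; case: ifP => _; rewrite ?mulr1 ?mulrNN ?mulr1.
have svn : forall i, `|sv 0 i| = 1.
  by move=> i; rewrite mxE; case: ifP => _; rewrite ?normrN normr1.
have svP : forall i, P i i * sv 0 i = `|P i i|.
  move=> i; rewrite mxE; case: ifP => hh.
    by rewrite mulr1 ger0_norm.
  by rewrite mulrN1 ltr0_norm // ltNge hh.
clearbody sv.
pose M := diag_mx sv.
have hM : orthmx M.
  rewrite /orthmx /M tr_diag_mx mulmx_diag; apply/matrixP => i j; rewrite !mxE.
  by case: (i == j); rewrite ?mulr1n ?mulr0n ?sv2.
pose Q' := Q *m M.
have hQ' : orthmx Q' := orthmxM hQ hM.
have hMD : M *m diag_mx mu *m M = diag_mx mu.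
  rewrite /M !mulmx_diag; congr diag_mx; apply/rowP => i; rewrite !mxE.
  by rewrite mulrAC sv2 mul1r.
have eX' : Q' *m diag_mx mu *m Q'^T = X.
  have -> : Q' *m diag_mx mu *m Q'^T = Q *m (M *m diag_mx mu *m M) *m Q^T.
    by rewrite /Q' trmx_mul /M tr_diag_mx !mulmxA.
  by rewrite hMD -eX.
have hoff2 : forall i, \sum_(j | j != i) P i j ^+ 2 <= N * eta ^+ 2.
  move=> i; apply: (@le_trans _ _ (\sum_(j < n) eta ^+ 2)); last first.
    by rewrite sumr_const card_ord mulr_natl.
  rewrite [X in _ <= X](bigD1 i) //= -[X in X <= _]add0r lerD ?sqr_ge0 //.
  apply: ler_sum => j hj; rewrite -real_normK ?num_real //.
  have := hoff i j; rewrite eq_sym hj => /(_ isT) hh.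
  have := normr_ge0 (P i j); nra.
have hPMe : forall i j, `|(P *m M - 1%:M) i j| <= eta.
  move=> i j; rewrite /M mul_mx_diag !mxE.
  case: (eqVneq i j) => [<- | hij].
    rewrite ?eqxx ?mulr1n svP.
    have hr := hrow i; rewrite (bigD1 i) //= in hr.
    rewrite distrC ger0_norm ?subr_ge0 //.
    have ht : N * eta ^+ 2 <= eta by rewrite expr2 mulrA ler_piMl // ltW.
    exact: (ar_diag (hPe i i) (hsq i i) hr (hoff2 i) ht).
  by rewrite ?(negbTE hij) ?mulr0n ?subr0 normrM svn mulr1; apply: hoff.
have eQ' : Q' - Qs = Qs *m (P *m M - 1%:M).
  by rewrite mulmxBr mulmx1 mulmxA hQsP.
have b := mul_bound (fun i j => orth_entry i j hQs) hPMe.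
have hf1 : frob (Q' - Qs) <= d2.
  rewrite eQ'; apply: le_trans (frob_le _ b) I4.
  by rewrite mul1r mulr_ge0 // ltW.
have bm : forall i j, `|(mu - lam) i j| <= N * eps.
  by move=> i j; rewrite !ord1 !mxE distrC hdiag.
have hf2 : frob (mu - lam) <= d2.
  by apply: le_trans (frob_le _ bm) I5; rewrite mulr_ge0 // ltW.
have := hmin Q' mu _ hf1 hf2.
  rewrite /fobj eX' -eXs; apply.
by split => //; split => //; split => //; rewrite eX'.
Qed.

End Backward.
Set Strict Implicit.
Unset Implicit Arguments.

Theorem theorem1 (R : realType) (n q : nat)
  (F : 'M[R]_n -> R) (G : 'M[R]_n -> 'rV[R]_q) (C : set 'rV[R]_n)
  (hC : closed C) (Xs : 'M[R]_n)
  (hsym : symmx Xs)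
  (hdist : forall i j : 'I_n, eigvals Xs 0 i = eigvals Xs 0 j -> i = j) :
  (locmin1 F G C Xs <->
     exists Qs : 'M[R]_n, spec_decomp Xs Qs /\ locmin2 F G C Qs (eigvals Xs))
  /\
  ((exists Qs : 'M[R]_n, spec_decomp Xs Qs /\ locmin2 F G C Qs (eigvals Xs)) ->
     forall Qs : 'M[R]_n, spec_decomp Xs Qs -> locmin2 F G C Qs (eigvals Xs)).
Proof.
split.
  split.
    move=> h1; have [_ [Qs hQs]] := symmx_eig hsym.
    by exists Qs; split => //; apply: forward h1 hQs.
  by move=> [Qs [hQs h2]]; apply: backward hsym hdist hQs h2.
move=> [Qs0 [hQs0 h2]] Qs hQs; apply: forward hQs.
exact: backward hsym hdist hQs0 h2.
Qed.
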